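(* Let $0\le a\le 1$. Then for every $v>0$, $$\int_0^a \frac{e^{-vu}\,u\, du}{\log^2 u+1}\approx \frac{1}{(v+1/a)^2\bigl(\log^2 (v+1/a)+1\bigr)}.$$ If additionally $av\le 1$, then $$\int_a^1 \frac{e^{-vu}\,u^{1/2}\, du}{1-\log u}\approx \frac{1-a}{(v+1)^{3/2}\bigl(1+\log (v+1)\bigr)}.$$
   Context: $f\approx g$ means $c^{-1}g\le f\le cg$ for an absolute constant $c>0$, uniformly over the indicated $a$ and $v$. *)

(* Defs.v *)
From HB Require Import structures.
From mathcomp Require Import all_boot all_order all_algebra.
From mathcomp Require Import all_classical all_reals all_analysis.
Set Implicit Arguments. Unset Strict Implicit. Unset Printing Implicit Defensive.
Import Order.TTheory GRing.Theory Num.Theory.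
Local Open Scope ring_scope.
Local Open Scope classical_set_scope.

Definition f1 (R : realType) (v u : R) : R :=
  expR (- (v * u)) * u / ((ln u) ^+ 2 + 1).

Definition f2 (R : realType) (v u : R) : R :=
  expR (- (v * u)) * Num.sqrt u / (1 - ln u).

(* Right-hand side of the first estimate; for a = 0 we have v + 1/a = +oo and
   the expression is interpreted as its limit 0. *)
Definition g1 (R : realType) (a v : R) : R :=
  if a == 0 then 0
  else 1 / ((v + a^-1) ^+ 2 * ((ln (v + a^-1)) ^+ 2 + 1)).

Definition g2 (R : realType) (a v : R) : R :=
  (1 - a) / (Num.sqrt (v + 1) ^+ 3 * (1 + ln (v + 1))).

(* Main.v *)
Require Import Defs.
From HB Require Import structures.
From mathcomp Require Import all_boot all_order all_algebra.
From mathcomp Require Import all_classical all_reals all_analysis.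
From mathcomp Require Import ring lra.
Import Order.TTheory GRing.Theory Num.Theory.
Local Open Scope ring_scope.
Local Open Scope classical_set_scope.

Section S.
Variable R : realType.

Lemma invE_exp (t : R) : 0 < t -> t^-1 = expR (- ln t).
Proof. by move=> t0; rewrite expRN lnK. Qed.

Lemma mexp_lin (v : R) : measurable_fun setT (fun u : R => expR (- (v * u))).
Proof.
apply: measurableT_comp => //; apply: measurable_realfun.measurable_funN.
by apply: measurable_realfun.measurable_funM => //.
Qed.

Lemma mf1 (v : R) : measurable_fun setT (f1 v).
Proof.
have -> : f1 v = (fun u => expR (- (v * u)) * u * expR (- ln (ln u ^+ 2 + 1))).
  apply/funext => u; rewrite /f1 -invE_exp //.
  by apply: ltr_pwDr => //; rewrite sqr_ge0.
apply: measurable_realfun.measurable_funM; first apply: measurable_realfun.measurable_funM => //; first exact: mexp_lin.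
apply: measurableT_comp => //; apply: measurable_realfun.measurable_funN.
apply: measurableT_comp; first exact: measurable_realfun.measurable_ln.
apply: measurable_realfun.measurable_funD => //; apply: measurable_realfun.measurable_funX; exact: measurable_realfun.measurable_ln.
Qed.

Lemma mf2 (v : R) : measurable_fun (`[0, 1] : set R) (f2 v).
Proof.
apply: (@eq_measurable_fun _ _ _ _ _ (fun u => expR (- (v * u)) * Num.sqrt u * expR (- ln (1 - ln u)))).
  move=> u; rewrite inE /= in_itv /= => /andP[u0 u1].
  rewrite /f2 -invE_exp //.
  have : ln u <= 0.
    have [->|up] := eqVneq u 0; first by rewrite ln0.
    by rewrite ln_le0.
  by move=> h; rewrite subr_gt0; apply: le_lt_trans h _.
apply: measurable_funTS.
apply: measurable_realfun.measurable_funM; first apply: measurable_realfun.measurable_funM => //; first exact: mexp_lin.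
  exact: measurable_realfun.continuous_measurable_fun (@sqrt_continuous R).
apply: measurableT_comp => //; apply: measurable_realfun.measurable_funN.
apply: measurableT_comp; first exact: measurable_realfun.measurable_ln.
apply: measurable_realfun.measurable_funB => //; exact: measurable_realfun.measurable_ln.
Qed.
End S.

Section S.
Variable R : realType.
Notation mu := (@lebesgue_measure R).

Lemma mexp_lin2 (v : R) : measurable_fun setT (fun u : R => expR (- (v * u))).
Proof.
apply: measurableT_comp => //; apply: measurable_realfun.measurable_funN.
by apply: measurable_realfun.measurable_funM => //.
Qed.

Lemma int_exp (r x : R) : 0 < r -> 0 < x ->
  (\int[mu]_(u in `[0%R, x]) (expR (- (r * u)))%:E <= (r^-1)%:E)%E.
Proof.
move=> r0 x0.
have h := exponential_prob_itv0c r x0.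
rewrite /exponential_prob in h.
have -> : (\int[mu]_(u in `[0%R, x]) (expR (- (r * u)))%:E =
   \int[mu]_(u in `[0%R, x]) ((r^-1)%:E * (exponential_pdf r u)%:E))%E.
  apply: eq_integral => u; rewrite inE /= in_itv /= => /andP[u0 _].
  by rewrite -EFinM exponential_pdfE // mulrA mulVf ?gt_eqF // mul1r mulNr.
rewrite ge0_integralZl_EFin //; last 3 first.
- move=> u _; rewrite lee_fin; exact: exponential_pdf_ge0 (ltW r0) _.
- apply/measurable_realfun.measurable_EFinP; apply: measurable_funTS; exact: measurable_exponential_pdf.
- by rewrite invr_ge0 ltW.
rewrite h -[X in (_ <= X)%E]mule1; apply: lee_pmul => //.
- by rewrite lee_fin invr_ge0 ltW.
- by rewrite -EFinB lee_fin subr_ge0 expR_le1 mulNr oppr_le0 mulr_ge0 // ltW.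
- by rewrite -EFinB lee_fin lerBlDr lerDl expR_ge0.
Qed.

Lemma int_lower (p q : R) (A : set R) (f : R -> R) (k : R) :
  measurable A -> `[p, q] `<=` A -> p <= q -> measurable_fun A f ->
  (forall x, A x -> 0 <= f x) -> 0 <= k -> (forall x, p <= x <= q -> k <= f x) ->
  ((k * (q - p))%:E <= \int[mu]_(x in A) (f x)%:E)%E.
Proof.
move=> mA sub pq mf f0 k0 kf.
apply: (@le_trans _ _ (\int[mu]_(x in `[p, q]) (f x)%:E)%E); last first.
  apply: ge0_subset_integral => //; first exact/measurable_realfun.measurable_EFinP.
apply: (@le_trans _ _ (\int[mu]_(x in `[p, q]) (cst k%:E) x)%E); last first.
  apply: ge0_le_integral => //.
  - apply/measurable_realfun.measurable_EFinP; exact: measurable_funS mf.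
rewrite integral_cst //= lebesgue_measure_itv /=.
rewrite lte_fin; have [pq'|qp] := ltP p q; first by rewrite -EFinD -EFinM.
have -> : q = p by apply/eqP; rewrite eq_le qp pq.
by rewrite subrr mulr0 mule0.
Qed.

Lemma int_upper_cst (p q : R) (f : R -> R) (k : R) : p <= q ->
  measurable_fun `[p, q] f -> (forall x, p <= x <= q -> 0 <= f x) ->
  (forall x, p <= x <= q -> f x <= k) ->
  (\int[mu]_(x in `[p, q]) (f x)%:E <= (k * (q - p))%:E)%E.
Proof.
move=> pq mf f0 fk.
apply: (@le_trans _ _ (\int[mu]_(x in `[p, q]) (cst k%:E) x)%E).
  apply: ge0_le_integral => //.
  exact/measurable_realfun.measurable_EFinP.
rewrite integral_cst //= lebesgue_measure_itv /=.
rewrite lte_fin; have [pq'|qp] := ltP p q; first by rewrite -EFinD -EFinM.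
have -> : q = p by apply/eqP; rewrite eq_le qp pq.
by rewrite subrr mulr0 mule0.
Qed.

Lemma int_upper_exp (x : R) (f : R -> R) (K r : R) : 0 < x -> 0 < r -> 0 <= K ->
  measurable_fun `[0%R, x] f -> (forall u, 0 <= u <= x -> 0 <= f u) ->
  (forall u, 0 <= u <= x -> f u <= K * expR (- (r * u))) ->
  (\int[mu]_(u in `[0%R, x]) (f u)%:E <= (K / r)%:E)%E.
Proof.
move=> x0 r0 K0 mf f0 fK.
apply: (@le_trans _ _ (\int[mu]_(u in `[0%R, x]) (K%:E * (expR (- (r * u)))%:E))%E).
  apply: ge0_le_integral => //.
  - exact/measurable_realfun.measurable_EFinP.
  - apply/measurable_realfun.measurable_EFinP; apply: measurable_realfun.measurable_funM => //.
    apply: measurable_funTS; exact: mexp_lin2.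
rewrite ge0_integralZl_EFin //.
rewrite EFinM; apply: lee_pmul => //.
- by apply: integral_ge0 => u _; rewrite lee_fin expR_ge0.
- exact: int_exp.
- apply/measurable_realfun.measurable_EFinP; apply: measurable_funTS; exact: mexp_lin2.
Qed.

Lemma fine_bounds (I : \bar R) (l u : R) : 0 <= l ->
  (l%:E <= I)%E -> (I <= u%:E)%E -> l <= fine I /\ fine I <= u.
Proof.
move=> l0 lI Iu.
have fI : I \is a fin_num.
  by rewrite ge0_fin_numE ?(le_trans _ lI) ?lee_fin // (le_lt_trans Iu) ?ltry.
split.
- by rewrite -lee_fin fineK.
- by rewrite -lee_fin fineK.
Qed.
End S.

Section S.
Variable R : realType.

Lemma exp_quad (y : R) : 0 <= y -> 2 + y ^+ 2 <= 2 * expR y.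
Proof.
move=> y0; have := expR_ge1Dxn 1 y0.
rewrite /= (_ : 2`!%:R = 2 :> R) //; lra.
Qed.

Lemma expR_ln_ratio (u b : R) : 0 < u -> 0 < b -> expR (ln u - ln b) = u / b.
Proof.
by move=> u0 b0; rewrite expRB !lnK // posrE.
Qed.

Lemma P1 (b u : R) : 0 < b -> b <= 1 -> 0 < u -> u <= 1 ->
  u / (ln u ^+ 2 + 1) <= 8 * (b / (ln b ^+ 2 + 1)) * (1 + (u / b) ^+ 2).
Proof.
move=> b0 b1 u0 u1.
have Du0 : 0 < ln u ^+ 2 + 1 by apply: ltr_wpDl; [exact: sqr_ge0|].
have Db0 : 0 < ln b ^+ 2 + 1 by apply: ltr_wpDl; [exact: sqr_ge0|].
have [ub|bu] := leP u b.
  have lub : ln u <= ln b by rewrite ler_ln // posrE.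
  have lb0 : ln b <= 0 := ln_le0 b1.
  have h1 : u / (ln u ^+ 2 + 1) <= b / (ln b ^+ 2 + 1).
    rewrite ler_pdivrMr // mulrAC ler_pdivlMr //.
    have : ln b ^+ 2 <= ln u ^+ 2 by nra.
    nra.
  apply: (le_trans h1).
  have : 0 <= b / (ln b ^+ 2 + 1) by apply: divr_ge0; [exact: ltW|exact: ltW].
  have : 0 <= (u / b) ^+ 2 by exact: sqr_ge0.
  nra.
set x := ln u - ln b.
have x0 : 0 <= x by rewrite subr_ge0 ler_ln // ?posrE // ltW.
set E := u / b.
have eE : expR x = E by rewrite expR_ln_ratio.
have E1 : 1 <= E by rewrite -eE -expR0 ler_expR.
have hq := @exp_quad x x0; rewrite eE in hq.
have uE : u = b * E by rewrite /E; field; rewrite gt_eqF.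
have Lb : ln b = ln u - x by rewrite /x; ring.
have key : E * (ln b ^+ 2 + 1) <= 8 * (1 + E ^+ 2) * (ln u ^+ 2 + 1).
  rewrite Lb.
  have s1 : (ln u - x) ^+ 2 + 1 <= (ln u ^+ 2 + 1) * (2 + 2 * x ^+ 2) by nra.
  have s2 : 2 + 2 * x ^+ 2 <= 4 * E by nra.
  have s3 : (ln u ^+ 2 + 1) * (2 + 2 * x ^+ 2) <= (ln u ^+ 2 + 1) * (4 * E).
    by apply: ler_wpM2l => //; exact: ltW.
  have s4 : E * ((ln u - x) ^+ 2 + 1) <= E * ((ln u ^+ 2 + 1) * (4 * E)).
    by apply: ler_wpM2l; [lra| exact: le_trans s1 s3].
  apply: (le_trans s4).
  have : 0 <= ln u ^+ 2 by exact: sqr_ge0.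
  nra.
rewrite [in X in X / _]uE ler_pdivrMr //.
have -> : 8 * (b / (ln b ^+ 2 + 1)) * (1 + E ^+ 2) * (ln u ^+ 2 + 1) =
  (b * (8 * (1 + E ^+ 2) * (ln u ^+ 2 + 1))) / (ln b ^+ 2 + 1).
  by field; rewrite gt_eqF.
rewrite ler_pdivlMr //.
nra.
Qed.

Lemma ln2_le1 : ln (2 : R) <= 1.
Proof. by have := @le_ln1Dx R 1 ltac:(lra); rewrite (_ : 1 + 1 = 2 :> R) //. Qed.

Lemma ln2_ge0 : 0 <= ln (2 : R).
Proof. by apply: ln_ge0; lra. Qed.

Lemma P1low (b x : R) : 0 < b -> b <= 1 -> b / 2 <= x -> x <= b ->
  b / (ln b ^+ 2 + 1) / 6 <= x / (ln x ^+ 2 + 1).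
Proof.
move=> b0 b1 bx xb.
have x0 : 0 < x by lra.
have Dx0 : 0 < ln x ^+ 2 + 1 by apply: ltr_wpDl; [exact: sqr_ge0|].
have Db0 : 0 < ln b ^+ 2 + 1 by apply: ltr_wpDl; [exact: sqr_ge0|].
have lxb : ln x <= ln b by rewrite ler_ln // posrE.
have lb0 : ln b <= 0 := ln_le0 b1.
have lx1 : ln b - 1 <= ln x.
  have : ln (b / 2) <= ln x by rewrite ler_ln // posrE; lra.
  have -> : ln (b / 2) = ln b - ln 2 by apply: ln_div; rewrite posrE; lra.
  have := ln2_le1; lra.
have hD : ln x ^+ 2 + 1 <= 3 * (ln b ^+ 2 + 1).
  have h1 : ln x ^+ 2 <= (ln b - 1) ^+ 2.
    have p : 0 <= (ln x - (ln b - 1)) * (- (ln b - 1) - ln x) by apply: mulr_ge0; lra.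
    rewrite !expr2; nra.
  have : 0 <= (ln b + 1) ^+ 2 by exact: sqr_ge0.
  move: h1; rewrite !expr2; nra.
rewrite ler_pdivrMr; last lra.
rewrite ler_pdivrMr // (mulrAC x) (mulrAC (x * 6)) ler_pdivlMr //.
nra.
Qed.

Lemma P2 (b u : R) : 0 < b -> b <= 1 -> 0 < u -> u <= 1 ->
  Num.sqrt u / (1 - ln u) <= Num.sqrt b / (1 - ln b) * (1 + (u / b) ^+ 2).
Proof.
move=> b0 b1 u0 u1.
have lu0 : ln u <= 0 := ln_le0 u1.
have lb0 : ln b <= 0 := ln_le0 b1.
have Du0 : 0 < 1 - ln u by lra.
have Db0 : 0 < 1 - ln b by lra.
have sb0 : 0 <= Num.sqrt b := sqrtr_ge0 b.
have su0 : 0 <= Num.sqrt u := sqrtr_ge0 u.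
have [ub|bu] := leP u b.
  have lub : ln u <= ln b by rewrite ler_ln // posrE.
  have sub : Num.sqrt u <= Num.sqrt b by rewrite ler_sqrt // ltW.
  have h1 : Num.sqrt u / (1 - ln u) <= Num.sqrt b / (1 - ln b).
    rewrite ler_pdivrMr // mulrAC ler_pdivlMr //.
    nra.
  apply: (le_trans h1).
  have : 0 <= Num.sqrt b / (1 - ln b) by apply: divr_ge0 => //; exact: ltW.
  have : 0 <= (u / b) ^+ 2 by exact: sqr_ge0.
  nra.
set x := ln u - ln b.
have x0 : 0 <= x by rewrite subr_ge0 ler_ln // ?posrE // ltW.
set E := u / b.
have eE : expR x = E by rewrite expR_ln_ratio.
have E1 : 1 <= E by rewrite -eE -expR0 ler_expR.
have hx : 1 + x <= E by rewrite -eE expR_ge1Dx.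
have uE : u = b * E by rewrite /E; field; rewrite gt_eqF.
have sE : Num.sqrt u = Num.sqrt b * Num.sqrt E by rewrite uE sqrtrM // ltW.
have sE1 : Num.sqrt E <= E.
  have sE0 : 0 <= Num.sqrt E := sqrtr_ge0 E.
  have : Num.sqrt E ^+ 2 = E by rewrite sqr_sqrtr //; lra.
  nra.
have Lb : ln b = ln u - x by rewrite /x; ring.
have key : Num.sqrt u * (1 - ln b) <= Num.sqrt b * (1 + E ^+ 2) * (1 - ln u).
  rewrite sE Lb.
  have s1 : 1 - (ln u - x) <= (1 - ln u) * E by nra.
  have s2 : Num.sqrt b * Num.sqrt E * (1 - (ln u - x)) <= Num.sqrt b * E * ((1 - ln u) * E).
    apply: ler_pM; [by apply: mulr_ge0; [|exact: sqrtr_ge0] | lra | by apply: ler_wpM2l | done].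
  apply: (le_trans s2).
  nra.
rewrite ler_pdivrMr //.
have -> : Num.sqrt b / (1 - ln b) * (1 + E ^+ 2) * (1 - ln u) =
  (Num.sqrt b * (1 + E ^+ 2) * (1 - ln u)) / (1 - ln b).
  by field; rewrite gt_eqF.
by rewrite ler_pdivlMr.
Qed.
End S.

Section S.
Variable R : realType.
Notation mu := (@lebesgue_measure R).

Definition gg (b : R) := b / (ln b ^+ 2 + 1).

Lemma gg_ge0 b : 0 <= b -> 0 <= gg b.
Proof.
move=> b0; apply: divr_ge0 => //; apply: addr_ge0 => //; exact: sqr_ge0.
Qed.

Lemma f1_ge0 (v x : R) : 0 <= x -> 0 <= f1 v x.
Proof.
move=> x0; rewrite /f1; apply: divr_ge0; first by apply: mulr_ge0 => //; exact: expR_ge0.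
by apply: addr_ge0 => //; exact: sqr_ge0.
Qed.

Lemma f1E (v x : R) : f1 v x = expR (- (v * x)) * gg x.
Proof. by rewrite /f1 /gg mulrA. Qed.

Lemma f1_ub (v b x : R) : 0 < b -> b <= 1 -> 0 <= x -> x <= 1 ->
  f1 v x <= expR (- (v * x)) * (8 * gg b * (1 + (x / b) ^+ 2)).
Proof.
move=> b0 b1 x0 x1; rewrite f1E.
have [->|xp] := eqVneq x 0.
  rewrite /gg mul0r mulr0; apply: mulr_ge0; first exact: expR_ge0.
  apply: mulr_ge0; [apply: mulr_ge0 => //; exact: (@gg_ge0 b (ltW b0))|].
  by apply: addr_ge0 => //; exact: sqr_ge0.
apply: ler_wpM2l; first exact: expR_ge0.
by apply: P1 => //; rewrite lt_neqAle eq_sym xp.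
Qed.

Lemma exp_poly (y : R) : 0 <= y -> expR (- y) * (1 + 4 * y ^+ 2) <= 32 * expR (- (y / 2)).
Proof.
move=> y0.
have h := @exp_quad R (y / 2) ltac:(lra).
have t0 : 0 < expR (- (y / 2)) := expR_gt0 _.
have ts : expR (- (y / 2)) * expR (y / 2) = 1 by rewrite -expRD addNr expR0.
have -> : expR (- y) = expR (- (y / 2)) * expR (- (y / 2)) by rewrite -expRD; congr expR; field.
have e : (y / 2) ^+ 2 = y ^+ 2 / 4 by field.
rewrite e in h.
nra.
Qed.

Lemma part1 (a v : R) : 0 < a -> a <= 1 -> 0 < v ->
  let b := (v + a^-1)^-1 in
  ((expR (-1) / 12 * (b * gg b))%:E <= \int[mu]_(x in `[0%R, a]) (f1 v x)%:E)%E /\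
  (\int[mu]_(x in `[0%R, a]) (f1 v x)%:E <= (1024 * (b * gg b))%:E)%E.
Proof.
move=> a0 a1 v0 b.
set ia := a^-1.
have aia : a * ia = 1 by rewrite /ia mulfV // gt_eqF.
have ia0 : 0 < ia by rewrite /ia invr_gt0.
have ia1 : 1 <= ia by nra.
have w0 : 0 < v + ia by lra.
have bw : b * (v + ia) = 1 by rewrite /b mulVf // gt_eqF.
have b0 : 0 < b by rewrite /b invr_gt0.
have ba : b <= a by nra.
have b1 : b <= 1 by lra.
have vb : v * b <= 1 by nra.
have G0 := @gg_ge0 b (ltW b0).
have mf : measurable_fun `[0%R, a] (f1 v) := measurable_funTS (@mf1 R v).
split.
  have := @int_lower R (b / 2) b `[0%R, a] (f1 v) (expR (-1) * (gg b / 6)).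
  have -> : expR (-1) * (gg b / 6) * (b - b / 2) = expR (-1) / 12 * (b * gg b) by field.
  apply => //.
  - by move=> x; rewrite /= !in_itv /= => /andP[h1 h2]; apply/andP; split; lra.
  - lra.
  - by move=> x; rewrite /= in_itv /= => /andP[h1 _]; exact: f1_ge0.
  - apply: mulr_ge0; [exact: expR_ge0|]; apply: divr_ge0 => //.
  - move=> x /andP[h1 h2]; rewrite f1E.
    apply: ler_pM.
    + exact: expR_ge0.
    + by apply: divr_ge0 => //.
    + by rewrite ler_expR; nra.
    + by rewrite /gg; apply: P1low.
have [vs|vl] := leP v ia.
  have := @int_upper_cst R 0 a (f1 v) (40 * gg b) (ltW a0) mf.
  move=> H; apply: (le_trans (H _ _)).
  - by move=> x /andP[h1 _]; exact: f1_ge0.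
  - move=> x /andP[h1 h2].
    apply: (le_trans (@f1_ub v b x b0 b1 h1 (le_trans h2 a1))).
    have xb : x / b = x * (v + ia) by rewrite /b invrK.
    have e1 : expR (- (v * x)) <= 1 by rewrite expR_le1; nra.
    have xw : x * (v + ia) <= 2.
      have : x * (v + ia) <= a * (v + ia) by apply: ler_wpM2r; lra.
      nra.
    have xw0 : 0 <= x * (v + ia) by apply: mulr_ge0; lra.
    have q : (x / b) ^+ 2 <= 4 by rewrite xb expr2; nra.
    have : 0 <= 8 * gg b * (1 + (x / b) ^+ 2).
      by apply: mulr_ge0; [nra|apply: addr_ge0 => //; exact: sqr_ge0].
    have := expR_ge0 (- (v * x)).
    nra.
  - rewrite lee_fin subr0.
    have : a <= 2 * b by nra.
    nra.
have := @int_upper_exp R a (f1 v) (256 * gg b) (v / 2) a0 ltac:(lra) ltac:(nra) mf.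
move=> H; apply: (le_trans (H _ _)).
- by move=> x /andP[h1 _]; exact: f1_ge0.
- move=> x /andP[h1 h2].
  apply: (le_trans (@f1_ub v b x b0 b1 h1 (le_trans h2 a1))).
  have xb : x / b = x * (v + ia) by rewrite /b invrK.
  have xw : x * (v + ia) <= 2 * (v * x) by nra.
  have xw0 : 0 <= x * (v + ia) by apply: mulr_ge0; lra.
  have q : (x / b) ^+ 2 <= 4 * (v * x) ^+ 2 by rewrite xb !expr2; nra.
  have hp := @exp_poly (v * x) ltac:(nra).
  have -> : v / 2 * x = v * x / 2 by field.
  have e0 := expR_ge0 (- (v * x)).
  have : expR (- (v * x)) * (1 + (x / b) ^+ 2) <= expR (- (v * x)) * (1 + 4 * (v * x) ^+ 2).
    by apply: ler_wpM2l => //; lra.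
  nra.
- rewrite lee_fin.
  have -> : 256 * gg b / (v / 2) = 512 * gg b / v by field; rewrite gt_eqF.
  rewrite ler_pdivrMr //.
  have : 1 <= 2 * b * v by nra.
  nra.
Qed.
End S.

Section S.
Variable R : realType.
Notation mu := (@lebesgue_measure R).

Lemma f2E (v x : R) : f2 v x = expR (- (v * x)) * (Num.sqrt x / (1 - ln x)).
Proof. by rewrite /f2 mulrA. Qed.

Lemma den2_pos (x : R) : x <= 1 -> 1 <= 1 - ln x.
Proof.
move=> x1; have [x0|x0] := leP x 0.
  by rewrite (@ln0 R x) // subr0.
by have := ln_le0 x1; lra.
Qed.

Lemma f2_ge0 (v x : R) : x <= 1 -> 0 <= f2 v x.
Proof.
move=> x1; rewrite f2E; apply: mulr_ge0; first exact: expR_ge0.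
apply: divr_ge0; first exact: sqrtr_ge0.
by have := @den2_pos x x1; lra.
Qed.

Lemma f2_le1 (v x : R) : 0 <= v -> 0 <= x -> x <= 1 -> f2 v x <= 1.
Proof.
move=> v0 x0 x1; rewrite f2E.
have e1 : expR (- (v * x)) <= 1 by rewrite expR_le1; nra.
have d1 := @den2_pos x x1.
have s1 : Num.sqrt x <= 1 by rewrite -sqrtr1 ler_sqrt.
have h : Num.sqrt x / (1 - ln x) <= 1.
  by rewrite ler_pdivrMr; lra.
have h0 : 0 <= Num.sqrt x / (1 - ln x).
  by apply: divr_ge0; [exact: sqrtr_ge0|lra].
have := expR_ge0 (- (v * x)); nra.
Qed.

Lemma f2_ub (v b x : R) : 0 < b -> b <= 1 -> 0 <= x -> x <= 1 ->
  f2 v x <= expR (- (v * x)) * (Num.sqrt b / (1 - ln b) * (1 + (x / b) ^+ 2)).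
Proof.
move=> b0 b1 x0 x1; rewrite f2E.
apply: ler_wpM2l; first exact: expR_ge0.
have [->|xp] := eqVneq x 0.
  rewrite sqrtr0 mul0r; apply: mulr_ge0.
    by apply: divr_ge0; [exact: sqrtr_ge0|have := @den2_pos b b1; lra].
  by apply: addr_ge0 => //; exact: sqr_ge0.
by apply: P2 => //; rewrite lt_neqAle eq_sym xp.
Qed.

Lemma sqrt_sq (x : R) : 0 <= x -> Num.sqrt x ^+ 2 = x.
Proof. by move=> x0; rewrite sqr_sqrtr. Qed.

Lemma low2A (a v m : R) : 0 <= a -> 0 < v -> v <= 2 -> a <= m -> 1 / 2 <= m -> m <= 1 ->
  ((expR (-2) / 4 * (1 - m))%:E <= \int[mu]_(x in `[a, 1%R]) (f2 v x)%:E)%E.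
Proof.
move=> a0 v0 v2 am m2 m1.
have sub : `[a, 1%R] `<=` `[0%R, 1%R].
  by move=> x; rewrite /= !in_itv /= => /andP[h1 h2]; apply/andP; split; lra.
have mf : measurable_fun `[a, 1%R] (f2 v) := measurable_funS (measurable_itv _) sub (@mf2 R v).
have hsub : `[m, 1%R] `<=` `[a, 1%R].
  by move=> x; rewrite /= !in_itv /= => /andP[h1 h2]; apply/andP; split; lra.
have hf0 : forall x, `[a, 1%R] x -> 0 <= f2 v x.
  by move=> x; rewrite /= in_itv /= => /andP[h1 h2]; exact: f2_ge0.
have hk0 : 0 <= expR (-2) / 4 :> R by have := expR_ge0 (-2 : R); lra.
apply: (@int_lower R m 1 `[a, 1%R] (f2 v) _ (measurable_itv _) hsub m1 mf hf0 hk0).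
move=> x /andP[h1 h2]; rewrite f2E.
have x0 : 0 < x by lra.
have e : expR (-2) <= expR (- (v * x)) by rewrite ler_expR; nra.
have sx : 1 / 2 <= Num.sqrt x.
  have := @sqrt_sq x (ltW x0); have := sqrtr_ge0 x; nra.
have lx : -1 <= ln x.
  have : ln (1 / 2) <= ln x by rewrite ler_ln ?posrE //; lra.
  have -> : ln (1 / 2 : R) = - ln 2 by rewrite div1r lnV // posrE.
  have := @ln2_le1 R; lra.
have lx0 : ln x <= 0 := ln_le0 h2.
have q : 1 / 4 <= Num.sqrt x / (1 - ln x).
  by rewrite ler_pdivlMr; lra.
have -> : expR (-2) / 4 = expR (-2) * (1 / 4) :> R by field.
apply: ler_pM => //; exact: expR_ge0.
Qed.

End S.

Section S.
Variable R : realType.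
Notation mu := (@lebesgue_measure R).
Lemma part2 (a v : R) : 0 <= a -> a <= 1 -> 0 < v -> a * v <= 1 ->
  ((expR (-2) / 8 * g2 a v)%:E <= \int[mu]_(x in `[a, 1%R]) (f2 v x)%:E)%E /\
  (\int[mu]_(x in `[a, 1%R]) (f2 v x)%:E <= (256 * g2 a v)%:E)%E.
Proof.
move=> a0 a1 v0 av.
set S := Num.sqrt (v + 1).
have S2 : S ^+ 2 = v + 1 by apply: sqrt_sq; lra.
have S1 : 1 <= S by rewrite -sqrtr1 ler_sqrt; lra.
set L1 := ln (v + 1).
have L10 : 0 <= L1 by apply: ln_ge0; lra.
set D := S ^+ 3 * (1 + L1).
have D1 : 1 <= D.
  have : 1 <= S ^+ 3 by rewrite exprn_ege1.
  rewrite /D; nra.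
have g2E : g2 a v = (1 - a) / D by [].
have sub : `[a, 1%R] `<=` `[0%R, 1%R].
  by move=> x; rewrite /= !in_itv /= => /andP[h1 h2]; apply/andP; split; lra.
have mf : measurable_fun `[a, 1%R] (f2 v) := measurable_funS (measurable_itv _) sub (@mf2 R v).
have g2le : g2 a v <= 1 - a.
  by rewrite g2E ler_pdivrMr; nra.
have g2ge0 : 0 <= g2 a v by rewrite g2E; apply: divr_ge0; lra.
have [vs|vl] := leP v 2.
  split.
    have [ah|ah] := leP a (1 / 2).
      apply: (le_trans _ (@low2A R a v (1 / 2) a0 v0 vs ah ltac:(lra) ltac:(lra))).
      rewrite lee_fin; have := expR_ge0 (-2 : R); nra.
    apply: (le_trans _ (@low2A R a v a a0 v0 vs (lexx a) ltac:(lra) a1)).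
    rewrite lee_fin; have := expR_ge0 (-2 : R); nra.
  have := @int_upper_cst R a 1 (f2 v) 1 a1 mf.
  move=> H; apply: (le_trans (H _ _)).
  - by move=> x /andP[h1 h2]; exact: f2_ge0.
  - by move=> x /andP[h1 h2]; apply: f2_le1 => //; lra.
  - rewrite lee_fin mul1r g2E.
    have Sle : S <= 2 by have := @sqrt_sq R (v+1) ltac:(lra); nra.
    have L1v : L1 <= v by rewrite /L1 addrC; apply: le_ln1Dx; lra.
    have D24 : D <= 24.
      have : S ^+ 3 <= 8.
        have h := mulr_ge0 (ltW (lt_le_trans ltr01 S1)) (ltW (lt_le_trans ltr01 S1)).
        rewrite !exprS expr0 mulr1; nra.
      rewrite /D; have : 0 <= S ^+ 3 by apply: exprn_ge0; lra.
      nra.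
    rewrite mulrA ler_pdivlMr; nra.
have iv0 : 0 < v^-1 by rewrite invr_gt0.
have viv : v * v^-1 = 1 by rewrite mulfV // gt_eqF.
have aiv : a <= v^-1 by nra.
have iv2 : v^-1 < 1 / 2 by nra.
set s := Num.sqrt v.
have s2 : s ^+ 2 = v by apply: sqrt_sq; lra.
have s0 : 0 < s by rewrite sqrtr_gt0.
have sS : s <= S by rewrite ler_sqrt; lra.
set L0 := ln v.
have L00 : 0 <= L0 by apply: ln_ge0; lra.
have L01 : L0 <= L1 by rewrite ler_ln ?posrE; lra.
split.
  have := @int_lower R v^-1 (2 * v^-1) `[a, 1%R] (f2 v) (expR (-2) * (Num.sqrt v^-1 / (1 + L0))).
  move=> H; apply: le_trans (H _ _ _ _ _ _ _) => //.
  - rewrite lee_fin.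
    have -> : Num.sqrt v^-1 = s^-1 by rewrite sqrtrV; lra.
    have -> : expR (-2) * (s^-1 / (1 + L0)) * (2 * v^-1 - v^-1) =
      expR (-2) / (s ^+ 3 * (1 + L0)).
      by rewrite -s2; field; rewrite !gt_eqF //; lra.
    rewrite g2E -mulrA ler_pM2l; last exact: expR_gt0.
    have Y0 : 0 < s ^+ 3 * (1 + L0) by apply: mulr_gt0; [apply: exprn_gt0|]; lra.
    have X0 : 0 <= (1 - a) / D by apply: divr_ge0; lra.
    apply: (@le_trans _ _ ((1 - a) / D)); first by lra.
    rewrite ler_pdivrMr; last lra.
    rewrite ler_pdivlMl //.
    have s3 : s ^+ 3 <= S ^+ 3.
      have h := mulr_ge0 (ltW s0) (ltW s0).
      have h' : s * s <= S * S by nra.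
      rewrite !exprS expr0 !mulr1; nra.
    have s30 : 0 <= s ^+ 3 by apply: exprn_ge0; lra.
    have YD : s ^+ 3 * (1 + L0) <= D by rewrite /D; apply: ler_pM => //; lra.
    have : s ^+ 3 * (1 + L0) * (1 - a) <= s ^+ 3 * (1 + L0) * 1.
      by apply: ler_wpM2l; lra.
    lra.
  - by move=> x; rewrite /= !in_itv /= => /andP[h1 h2]; apply/andP; split; lra.
  - lra.
  - by move=> x; rewrite /= in_itv /= => /andP[h1 h2]; exact: f2_ge0.
  - apply: mulr_ge0; [exact: expR_ge0|]; apply: divr_ge0; [exact: sqrtr_ge0|lra].
  - move=> x /andP[h1 h2]; rewrite f2E.
    have x0 : 0 < x by lra.
    have e : expR (-2) <= expR (- (v * x)) by rewrite ler_expR; nra.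
    have sx : Num.sqrt v^-1 <= Num.sqrt x by rewrite ler_sqrt; lra.
    have lx : - L0 <= ln x.
      have : ln v^-1 <= ln x by rewrite ler_ln // posrE.
      by rewrite lnV // posrE.
    have lx0 : ln x <= 0 by apply: ln_le0; lra.
    have q : Num.sqrt v^-1 / (1 + L0) <= Num.sqrt x / (1 - ln x).
      rewrite ler_pdivrMr; last lra.
      rewrite mulrAC ler_pdivlMr; last lra.
      have := sqrtr_ge0 v^-1; nra.
    apply: ler_pM; [exact: expR_ge0 | apply: divr_ge0; [exact: sqrtr_ge0|lra] | exact: e | exact: q].
set b := (v + 1)^-1.
have b0 : 0 < b by rewrite invr_gt0; lra.
have bw : b * (v + 1) = 1 by rewrite mulVf // gt_eqF; lra.
have b1 : b <= 1 by nra.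
have mf0 : measurable_fun (`[0%R, 1%R] : set R) (f2 v) := @mf2 R v.
apply: (@le_trans _ _ (\int[mu]_(x in `[0%R, 1%R]) (f2 v x)%:E)%E).
  apply: ge0_subset_integral => //.
  - exact/measurable_realfun.measurable_EFinP.
  - by move=> x; rewrite /= in_itv /= => /andP[h1 h2]; rewrite lee_fin; exact: f2_ge0.
set H0 := Num.sqrt b / (1 - ln b).
have H00 : 0 <= H0 by apply: divr_ge0; [exact: sqrtr_ge0|have := @den2_pos R b b1; lra].
have := @int_upper_exp R 1 (f2 v) (32 * H0) (v / 2) ltr01 ltac:(lra) ltac:(nra) mf0.
move=> H; apply: (le_trans (H _ _)).
- by move=> x /andP[h1 h2]; exact: f2_ge0.
- move=> x /andP[h1 h2].
  apply: (le_trans (@f2_ub R v b x b0 b1 h1 h2)).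
  have xb : x / b = x * (v + 1) by rewrite /b invrK.
  have xw : x * (v + 1) <= 2 * (v * x) by nra.
  have xw0 : 0 <= x * (v + 1) by apply: mulr_ge0; lra.
  have q : (x / b) ^+ 2 <= 4 * (v * x) ^+ 2 by rewrite xb !expr2; nra.
  have hp := @exp_poly R (v * x) ltac:(nra).
  have -> : v / 2 * x = v * x / 2 by field.
  have e0 := expR_ge0 (- (v * x)).
  have : expR (- (v * x)) * (1 + (x / b) ^+ 2) <= expR (- (v * x)) * (1 + 4 * (v * x) ^+ 2).
    by apply: ler_wpM2l => //; lra.
  move=> k0.
  have k : expR (- (v * x)) * (1 + (x / b) ^+ 2) <= 32 * expR (- (v * x / 2)) by lra.
  have -> : 32 * H0 * expR (- (v * x / 2)) = H0 * (32 * expR (- (v * x / 2))) by ring.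
  have -> : expR (- (v * x)) * (H0 * (1 + (x / b) ^+ 2)) = H0 * (expR (- (v * x)) * (1 + (x / b) ^+ 2)) by ring.
  apply: (ler_wpM2l H00); exact: k.
- rewrite lee_fin.
  have sb : Num.sqrt b = S^-1 by rewrite sqrtrV; lra.
  have lb : ln b = - L1 by rewrite lnV // posrE; lra.
  have hS : S != 0 by rewrite gt_eqF //; lra.
  have hL : 1 + L1 != 0 by rewrite gt_eqF //; lra.
  have hv : v != 0 by rewrite gt_eqF //; lra.
  have hD : D != 0 by rewrite gt_eqF //; lra.
  have hL' : 1 - - L1 != 0 by rewrite opprK.
  have -> : 32 * H0 / (v / 2) = 64 / (v * (S * (1 + L1))).
    by rewrite /H0 sb lb; field; rewrite ?hS ?hL ?hv ?hL'.
  have P0 : 0 < S * (1 + L1) by apply: mulr_gt0; lra.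
  rewrite ler_pdivrMr; last by apply: mulr_gt0.
  rewrite g2E.
  have -> : 256 * ((1 - a) / D) * (v * (S * (1 + L1))) =
            (256 * (1 - a) * (v * (S * (1 + L1)))) / D.
    by field; rewrite ?hD.
  rewrite ler_pdivlMr; last lra.
  have DE : D = (v + 1) * (S * (1 + L1)) by rewrite /D -S2; ring.
  rewrite DE.
  have hA : 1 / 2 <= 1 - a by lra.
  have : 64 * (v + 1) <= 256 * (1 - a) * v by nra.
  move=> h; have := ler_wpM2r (ltW P0) h.
  rewrite -!mulrA; lra.
Qed.

End S.

Theorem mainTheorem11 (R : realType) :
  exists c : R, 0 < c /\
    forall a v : R, 0 <= a -> a <= 1 -> 0 < v ->
      (c^-1 * g1 a v <= Rintegral lebesgue_measure `[0, a] (f1 v) /\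
       Rintegral lebesgue_measure `[0, a] (f1 v) <= c * g1 a v) /\
      (a * v <= 1 ->
       c^-1 * g2 a v <= Rintegral lebesgue_measure `[a, 1] (f2 v) /\
       Rintegral lebesgue_measure `[a, 1] (f2 v) <= c * g2 a v).
Proof.
set E1 := expR (1 : R).
have E11 : 1 <= E1 by rewrite /E1 -expR0 ler_expR.
have E1sq : 1 <= E1 * E1 by nra.
have E1n : E1 != 0 by rewrite gt_eqF //; lra.
have E2 : expR (2 : R) = E1 * E1 by rewrite /E1 -expRD.
have Em1 : expR (-1 : R) = E1^-1 by rewrite /E1 expRN.
have Em2 : expR (-2 : R) = (E1 * E1)^-1 by rewrite -E2 expRN.
exists (1024 * expR 2).
have c0 : 0 < 1024 * expR (2 : R) by have := expR_gt0 (2 : R); lra.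
split => // a v a0 a1 v0.
have cE : (1024 * expR (2 : R))^-1 = (1024 * (E1 * E1))^-1 by rewrite E2.
split.
  rewrite /Rintegral.
  have [->|ap] := eqVneq a 0.
    have -> : g1 0 v = 0 by rewrite /g1 eqxx.
    rewrite !mulr0.
    apply: fine_bounds => //.
      by apply: integral_ge0 => x; rewrite /= in_itv /= => /andP[h1 _]; rewrite lee_fin; exact: f1_ge0.
    have := @int_upper_cst R 0 0 (f1 v) 0 (lexx 0) (measurable_funTS (@mf1 R v)).
    rewrite mul0r; apply.
    - by move=> x /andP[h1 h2]; exact: f1_ge0.
    - move=> x /andP[h1 h2]; have -> : x = 0 by apply/eqP; rewrite eq_le h2 h1.
      by rewrite /f1 mulr0 mul0r.
  have a0' : 0 < a by rewrite lt_neqAle eq_sym ap.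
  have [hl hu] := @part1 R a v a0' a1 v0.
  set b := (v + a^-1)^-1 in hl hu.
  have w0 : 0 < v + a^-1 by apply: addr_gt0 => //; rewrite invr_gt0.
  have g1E : g1 a v = b * gg R b.
    have hw : v + a^-1 != 0 by rewrite gt_eqF.
    have hD : ln (v + a^-1) ^+ 2 + 1 != 0.
      by rewrite gt_eqF //; apply: ltr_wpDl; [exact: sqr_ge0|].
    rewrite /g1 (negbTE ap) /gg /b lnV ?posrE // sqrrN.
    have hva : v * a + 1 != 0.
      by rewrite gt_eqF //; have := mulr_gt0 v0 a0'; lra.
    by field; rewrite hD ap hva.
  have G0 : 0 <= b * gg R b by apply: mulr_ge0; [rewrite /b invr_ge0 ltW|apply: gg_ge0; rewrite /b invr_ge0 ltW].
  rewrite g1E; apply: fine_bounds.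
  - by apply: mulr_ge0; [rewrite invr_ge0; exact: ltW c0 | exact: G0].
  - apply: le_trans hl; rewrite lee_fin; apply: ler_wpM2r => //.
    have key : (1024 * (E1 * E1))^-1 <= (12 * E1)^-1.
      by rewrite lef_pV2 ?posrE; nra.
    rewrite cE Em1.
    have -> : E1^-1 / 12 = (12 * E1)^-1 by field.
    exact: key.
  - apply: (le_trans hu); rewrite lee_fin; apply: ler_wpM2r => //.
    rewrite E2; nra.
move=> av.
have [hl hu] := @part2 R a v a0 a1 v0 av.
have g20 : 0 <= g2 a v.
  rewrite /g2; apply: divr_ge0; first lra.
  apply: mulr_ge0; first by apply: exprn_ge0; exact: sqrtr_ge0.
  by have := @ln_ge0 R (v + 1) ltac:(lra); lra.
rewrite /Rintegral; apply: fine_bounds.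
- by apply: mulr_ge0; [rewrite invr_ge0; exact: ltW c0 | exact: g20].
- apply: le_trans hl; rewrite lee_fin; apply: ler_wpM2r => //.
  have key : (1024 * (E1 * E1))^-1 <= (8 * (E1 * E1))^-1.
    by rewrite lef_pV2 ?posrE; nra.
  rewrite cE Em2.
  have -> : (E1 * E1)^-1 / 8 = (8 * (E1 * E1))^-1 by field.
  exact: key.
- apply: (le_trans hu); rewrite lee_fin; apply: ler_wpM2r => //.
  rewrite E2; nra.
Qed.
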